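(* Let $\omega,\gamma_+,\gamma_-,\gamma_z\in\mathbb{R}$ and let $\mathcal{L}^\ddagger:\mathcal{M}_2\to\mathcal{M}_2$ be $$\mathcal{L}^\ddagger(X)=\tfrac{i\omega}{2}[\sigma_z,X]+\gamma_+\Big(\sigma_-X\sigma_+-\tfrac12\{\sigma_-\sigma_+,X\}\Big)+\gamma_-\Big(\sigma_+X\sigma_--\tfrac12\{\sigma_+\sigma_-,X\}\Big)+\gamma_z(\sigma_zX\sigma_z-X).$$ Then $\mathcal{L}^\ddagger(X^2)-\mathcal{L}^\ddagger(X)X-X\mathcal{L}^\ddagger(X)\ge 0$ for all Hermitian $X\in\mathcal{M}_2$ if and only if $\gamma_\pm\ge 0$ and $\sqrt{\gamma_+\gamma_-}+2\gamma_z\ge 0$.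
   Context: $\sigma_x,\sigma_y,\sigma_z$ are the Pauli matrices, $\sigma_\pm=\frac12(\sigma_x\pm i\sigma_y)$, $[A,B]=AB-BA$, $\{A,B\}=AB+BA$; $\ge 0$ means positive semidefinite. *)

(* Defs.v *)
From HB Require Import structures.
From mathcomp Require Import all_boot all_order all_algebra.
From mathcomp Require Import complex.
Set Implicit Arguments. Unset Strict Implicit. Unset Printing Implicit Defensive.
Import Order.TTheory GRing.Theory Num.Theory.
Local Open Scope ring_scope.
Local Open Scope complex_scope.

Section Pauli.
Variable R : rcfType.
Local Notation C := (R[i]).

Definition sigma_x : 'M[C]_2 :=
  \matrix_(i < 2, j < 2) (if i != j then 1 else 0).
Definition sigma_y : 'M[C]_2 :=
  \matrix_(i < 2, j < 2)
    (if (i == 0%N :> nat) && (j == 1%N :> nat) then - 'i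
     else if (i == 1%N :> nat) && (j == 0%N :> nat) then 'i else 0).
Definition sigma_z : 'M[C]_2 :=
  \matrix_(i < 2, j < 2)
    (if i == j then (if i == 0%N :> nat then 1 else -1) else 0).
Definition sigma_p : 'M[C]_2 := 2^-1 *: (sigma_x + 'i *: sigma_y).
Definition sigma_m : 'M[C]_2 := 2^-1 *: (sigma_x - 'i *: sigma_y).

Definition comm (A B : 'M[C]_2) := A * B - B * A.
Definition acomm (A B : 'M[C]_2) := A * B + B * A.

Definition adjm (A : 'M[C]_2) : 'M[C]_2 := map_mx conjc A^T.
Definition is_hermitian (A : 'M[C]_2) := adjm A = A.
(* positive semidefinite: v^* A v >= 0 for all v (in the partial order of C) *)
Definition is_psd (A : 'M[C]_2) :=
  forall v : 'cV[C]_2, 0 <= ((map_mx conjc v)^T *m A *m v) 0 0.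

Definition Ldag (w gp gm gz : R) (X : 'M[C]_2) : 'M[C]_2 :=
  (('i * w%:C) / 2) *: comm sigma_z X
  + gp%:C *: (sigma_m * X * sigma_p - 2^-1 *: acomm (sigma_m * sigma_p) X)
  + gm%:C *: (sigma_p * X * sigma_m - 2^-1 *: acomm (sigma_p * sigma_m) X)
  + gz%:C *: (sigma_z * X * sigma_z - X).
End Pauli.

(* Main.v *)
Require Import Defs.
From HB Require Import structures.
From mathcomp Require Import all_boot all_order all_algebra.
From mathcomp Require Import complex.
From mathcomp Require Import ring lra.
Import Order.TTheory GRing.Theory Num.Theory.
Local Open Scope ring_scope.
Local Open Scope complex_scope.
Section S.
Variable R : rcfType.
Local Notation C := (R[i]).

Definition mx2 (a b c d : C) : 'M[C]_2 :=
  \matrix_(i < 2, j < 2) if i == 0 :> 'I_2 then (if j == 0 :> 'I_2 then a else b)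
                        else (if j == 0 :> 'I_2 then c else d).

Lemma mx2_eq (X : 'M[C]_2) : X = mx2 (X 0 0) (X 0 1) (X 1 0) (X 1 1).
Proof.
apply/matrixP=> i j; rewrite !mxE.
case: i => [[|[|//]] Hi]; case: j => [[|[|//]] Hj] /=; congr (X _ _); exact: val_inj.
Qed.

Lemma mx2_mul a b c d a' b' c' d' :
  mx2 a b c d * mx2 a' b' c' d' =
  mx2 (a*a'+b*c') (a*b'+b*d') (c*a'+d*c') (c*b'+d*d').
Proof.
rewrite -mulmxE; apply/matrixP=> i j; rewrite !mxE !big_ord_recr big_ord0 /= !mxE /=.
by case: i => [[|[|//]] Hi]; case: j => [[|[|//]] Hj] /=; rewrite add0r.
Qed.

Lemma mx2_add a b c d a' b' c' d' :
  mx2 a b c d + mx2 a' b' c' d' = mx2 (a+a') (b+b') (c+c') (d+d').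
Proof.
apply/matrixP=> i j; rewrite !mxE.
by case: i => [[|[|//]] Hi]; case: j => [[|[|//]] Hj].
Qed.

Lemma mx2_opp a b c d : - mx2 a b c d = mx2 (-a) (-b) (-c) (-d).
Proof.
apply/matrixP=> i j; rewrite !mxE.
by case: i => [[|[|//]] Hi]; case: j => [[|[|//]] Hj].
Qed.

Lemma mx2_scale k a b c d : k *: mx2 a b c d = mx2 (k*a) (k*b) (k*c) (k*d).
Proof.
apply/matrixP=> i j; rewrite !mxE.
by case: i => [[|[|//]] Hi]; case: j => [[|[|//]] Hj].
Qed.

Lemma sz_E : sigma_z R = mx2 1 0 0 (-1).
Proof.
apply/matrixP=> i j; rewrite !mxE.
by case: i => [[|[|//]] Hi]; case: j => [[|[|//]] Hj].
Qed.

Lemma sp_E : sigma_p R = mx2 0 1 0 0.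
Proof.
rewrite /sigma_p.
have -> : sigma_x R = mx2 0 1 1 0.
  apply/matrixP=> i j; rewrite !mxE.
  by case: i => [[|[|//]] Hi]; case: j => [[|[|//]] Hj].
have -> : sigma_y R = mx2 0 (-'i) 'i 0.
  apply/matrixP=> i j; rewrite !mxE.
  by case: i => [[|[|//]] Hi]; case: j => [[|[|//]] Hj].
rewrite !mx2_scale mx2_add !mx2_scale.
have hi : 'i * 'i = -1 :> C by rewrite -expr2 sqr_i.
have h2 : (2:C) != 0 by rewrite pnatr_eq0.
by congr mx2; rewrite ?mulr0 ?addr0 ?mulrN ?hi ?opprK ?subrr ?mulr0 // mulVf.
Qed.

Lemma sm_E : sigma_m R = mx2 0 0 1 0.
Proof.
rewrite /sigma_m.
have -> : sigma_x R = mx2 0 1 1 0.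
  apply/matrixP=> i j; rewrite !mxE.
  by case: i => [[|[|//]] Hi]; case: j => [[|[|//]] Hj].
have -> : sigma_y R = mx2 0 (-'i) 'i 0.
  apply/matrixP=> i j; rewrite !mxE.
  by case: i => [[|[|//]] Hi]; case: j => [[|[|//]] Hj].
rewrite !mx2_scale mx2_opp mx2_add !mx2_scale.
have hi : 'i * 'i = -1 :> C by rewrite -expr2 sqr_i.
have h2 : (2:C) != 0 by rewrite pnatr_eq0.
by congr mx2; rewrite ?mulr0 ?oppr0 ?addr0 ?mulrN ?hi ?opprK ?subrr ?mulr0 // mulVf.
Qed.


Definition Dm w gp gm gz (X : 'M[C]_2) :=
  Ldag w gp gm gz (X * X) - Ldag w gp gm gz X * X - X * Ldag w gp gm gz X.

Lemma D_E w gp gm gz a b c d :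
  Dm w gp gm gz (mx2 a b c d) =
  mx2 (gp%:C * (b*c) + gm%:C * (b*c + (d-a)^+2) + 4 * gz%:C * (b*c))
      ((gp%:C - gm%:C) * (d-a) * b) ((gp%:C - gm%:C) * (d-a) * c)
      (gp%:C * ((d-a)^+2 + b*c) + gm%:C * (b*c) + 4 * gz%:C * (b*c)).
Proof.
rewrite /Dm /Ldag /comm /acomm sz_E sp_E sm_E.
rewrite !(mx2_mul, mx2_opp, mx2_add, mx2_scale).
have h2 : (2:C) != 0 by rewrite pnatr_eq0.
congr mx2; field => //.
Qed.
Definition Fr (gp gm gz e x y p q r s : R) :=
  ((gp+gm+4*gz)*(x^+2+y^+2) + gm*e^+2)*(p^+2+q^+2)
  + ((gp+gm+4*gz)*(x^+2+y^+2) + gp*e^+2)*(r^+2+s^+2)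
  + 2*(gp-gm)*e*(x*(p*r+q*s) - y*(p*s-q*r)).

Lemma Fr_nonneg gp gm gz e x y p q r s :
  0 <= gp -> 0 <= gm -> 0 <= Num.sqrt (gp*gm) + 2*gz -> 0 <= Fr gp gm gz e x y p q r s.
Proof.
move=> hp hm hc.
have hr : 0 <= Num.sqrt (gp*gm) := sqrtr_ge0 _.
have hr2 : Num.sqrt (gp*gm) ^+ 2 = gp*gm by rewrite sqr_sqrtr // mulr_ge0.
move: hr hr2 hc; set rho := Num.sqrt _ => hr hr2 hc.
have hg : 2*rho <= gp+gm.
  have E1 : (gp+gm)^+2 - (2*rho)^+2 = (gp-gm)^+2 by rewrite exprMn hr2; ring.
  case: (lerP (2*rho) (gp+gm)) => // H.
  have E2 : 0 < (2*rho - (gp+gm))*((gp+gm) + 2*rho) by apply: mulr_gt0; lra.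
  have E3 : 0 <= (gp-gm)^+2 by apply: sqr_ge0.
  exfalso; nra.
pose k := gp+gm+4*gz.
have hk : 0 <= k by rewrite /k; lra.
pose mm := x^+2+y^+2. pose t := e^+2.
have hm0 : 0 <= mm by rewrite /mm; nra.
have ht0 : 0 <= t by rewrite /t; nra.
have hdet : (gp-gm)^+2 * t * mm <= (k*mm + gm*t)*(k*mm+gp*t).
  have -> : (k*mm + gm*t)*(k*mm+gp*t) = (k*mm - rho*t)^+2 + (k - (gp+gm) + 2*rho)*((gp+gm)+2*rho)*(mm*t) + (gp-gm)^+2 * t * mm.
    apply/eqP; rewrite -subr_eq0; apply/eqP.
    transitivity ((gp*gm - rho^+2)*(t^+2 + 4*mm*t)); first by rewrite /k; ring.
    by rewrite hr2 subrr mul0r.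
  have h1 : 0 <= (k - (gp+gm) + 2*rho)*((gp+gm)+2*rho)*(mm*t).
    apply: mulr_ge0; last exact: mulr_ge0.
    apply: mulr_ge0; rewrite /k; lra.
  have h2 := sqr_ge0 (k*mm - rho*t).
  lra.
pose P := p^+2+q^+2. pose Q := r^+2+s^+2.
pose Z := x*(p*r+q*s) - y*(p*s-q*r).
have hZ : Z^+2 <= mm*(P*Q).
  have -> : mm*(P*Q) = Z^+2 + (x*(p*s-q*r) + y*(p*r+q*s))^+2 by rewrite /mm /P /Q /Z; ring.
  have := sqr_ge0 (x*(p*s-q*r) + y*(p*r+q*s)); lra.
have hP : 0 <= P by rewrite /P; nra.
have hQ : 0 <= Q by rewrite /Q; nra.
pose al := k*mm + gm*t. pose be := k*mm + gp*t.
have hal : 0 <= al by rewrite /al; nra.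
have hbe : 0 <= be by rewrite /be; nra.
pose T := (gp-gm)*e*Z.
have hT : T^+2 <= al*be*(P*Q).
  have -> : T^+2 = (gp-gm)^+2 * t * Z^+2 by rewrite /T /t; ring.
  have h3 : 0 <= (gp-gm)^+2 * t by apply: mulr_ge0 => //; apply: sqr_ge0.
  have h4 : (gp-gm)^+2 * t * Z^+2 <= (gp-gm)^+2 * t * (mm*(P*Q)) by apply: ler_wpM2l.
  have h5 : (gp-gm)^+2 * t * (mm*(P*Q)) <= al*be*(P*Q).
    have -> : (gp-gm)^+2 * t * (mm*(P*Q)) = ((gp-gm)^+2 * t * mm)*(P*Q) by ring.
    apply: ler_wpM2r; [exact: mulr_ge0 | exact: hdet].
  lra.
have -> : Fr gp gm gz e x y p q r s = al*P + be*Q + 2*T.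
  by rewrite /Fr /al /be /T /k /mm /t /P /Q /Z; ring.
have hS : 0 <= al*P + be*Q by apply: addr_ge0; apply: mulr_ge0.
have hS2 : 4*T^+2 <= (al*P + be*Q)^+2.
  have -> : (al*P + be*Q)^+2 = (al*P - be*Q)^+2 + 4*(al*be*(P*Q)) by ring.
  have := sqr_ge0 (al*P - be*Q); lra.
have [hT0|hT0] := lerP 0 T; first by lra.
have : (-2*T)^+2 <= (al*P + be*Q)^+2 by have -> : (-2*T)^+2 = 4*T^+2 by ring.
rewrite ler_sqr ?nnegrE; lra.
Qed.

Lemma Fr_special P Q B gz : B^+2 = P*Q ->
  Fr (P^+2) (Q^+2) gz (P-Q) B 0 (-B) 0 Q 0 = (4*gz + 2*(P*Q))*(P*Q)*(P*Q+Q^+2).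
Proof.
move=> hB.
transitivity ((Q*(P-Q)*(-B)+(P-Q)*B*Q)^+2 + ((P-Q)*(P*Q - B^+2))^+2
   + (4*gz+2*(P*Q))*B^+2*(B^+2+Q^+2)); first by rewrite /Fr; ring.
rewrite hB; ring.
Qed.

Lemma aux_neg G gz : 0 <= G -> gz < 0 ->
  exists b : R, b^+2 * (4*gz + (G+4*gz)*b^+2) < 0.
Proof.
move=> hG hz.
have hd : 0 < G - 4*gz by lra.
exists ((-2*gz)/(G-4*gz)).
set b := (-2*gz)/(G-4*gz).
have hb : b * (G-4*gz) = -2*gz by rewrite /b divfK // gt_eqF.
have hb0 : 0 < b by rewrite /b divr_gt0 //; lra.
have -> : 4*gz + (G+4*gz)*b^+2 = 2*gz*(2 - b + 4*b^+2).
  transitivity (4*gz + (b*(G-4*gz))*b + 8*gz*b^+2); first by ring.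
  rewrite hb; ring.
have hb2 : 0 < b^+2 by rewrite exprn_gt0.
have hq : 0 < 2 - b + 4*b^+2.
  have := sqr_ge0 (2*b - 1/4); lra.
have hX : 2*gz*(2 - b + 4*b^+2) < 0 by nra.
nra.
Qed.

Lemma Fr_nec gp gm gz :
  (forall e x y p q r s, 0 <= Fr gp gm gz e x y p q r s) ->
  0 <= gp /\ 0 <= gm /\ 0 <= Num.sqrt (gp*gm) + 2*gz.
Proof.
move=> H.
have hm : 0 <= gm.
  have E : Fr gp gm gz 1 0 0 1 0 0 0 = gm by rewrite /Fr; ring.
  by have := H 1 0 0 1 0 0 0; rewrite E.
have hp : 0 <= gp.
  have E : Fr gp gm gz 1 0 0 0 0 1 0 = gp by rewrite /Fr; ring.
  by have := H 1 0 0 0 0 1 0; rewrite E.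
split=> //; split=> //.
have [hr0|hrpos] := eqVneq (Num.sqrt (gp*gm)) 0.
  rewrite hr0 add0r.
  have hpm : gp * gm = 0.
    by move/eqP: hr0; rewrite sqrtr_eq0 => h; apply/eqP; rewrite eq_le h mulr_ge0.
  case: (lerP 0 gz) => hz; first by lra.
  exfalso.
  move/eqP: hpm; rewrite mulf_eq0 => /orP[/eqP hp0|/eqP hm0].
    have [b hb] := aux_neg _ _ hm hz.
    have E : Fr gp gm gz 1 b 0 b 0 1 0 = b^+2 * (4*gz + (gm+4*gz)*b^+2).
      by rewrite /Fr hp0; ring.
    by have := H 1 b 0 b 0 1 0; rewrite E; lra.
  have [b hb] := aux_neg _ _ hp hz.
  have E : Fr gp gm gz 1 b 0 1 0 (-b) 0 = b^+2 * (4*gz + (gp+4*gz)*b^+2).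
    by rewrite /Fr hm0; ring.
  by have := H 1 b 0 1 0 (-b) 0; rewrite E; lra.
have hr : 0 < Num.sqrt (gp*gm) by rewrite lt_neqAle eq_sym hrpos sqrtr_ge0.
have hPQ : Num.sqrt gp * Num.sqrt gm = Num.sqrt (gp*gm) by rewrite sqrtrM.
move: hr hPQ; set rho := Num.sqrt (gp*gm) => hr hPQ.
have hP2 : Num.sqrt gp ^+ 2 = gp by rewrite sqr_sqrtr.
have hQ2 : Num.sqrt gm ^+ 2 = gm by rewrite sqr_sqrtr.
have hB2 : Num.sqrt rho ^+ 2 = rho by rewrite sqr_sqrtr // ltW.
have hgm : 0 < gm.
  rewrite lt_neqAle hm andbT; apply/eqP => h0.
  move: hr; rewrite -hPQ -h0 sqrtr0 mulr0; lra.
have := H (Num.sqrt gp - Num.sqrt gm) (Num.sqrt rho) 0 (- Num.sqrt rho) 0 (Num.sqrt gm) 0.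
rewrite -{1}hP2 -{1}hQ2 Fr_special; last by rewrite hB2.
rewrite hPQ hQ2 => h.
have hpos : 0 < rho * (rho + gm) by apply: mulr_gt0 => //; lra.
nra.
Qed.

Definition cv2 (v0 v1 : C) : 'cV[C]_2 := \col_(i < 2) (if i == 0 :> 'I_2 then v0 else v1).

Lemma cv2_eq (v : 'cV[C]_2) : v = cv2 (v 0 0) (v 1 0).
Proof.
apply/matrixP=> i j; rewrite !mxE (ord1 j).
by case: i => [[|[|//]] Hi] /=; congr (v _ _); exact: val_inj.
Qed.

Lemma qf_E (M : 'M[C]_2) (v0 v1 : C) :
  ((map_mx conjc (cv2 v0 v1))^T *m M *m cv2 v0 v1) 0 0 =
  v0^* * (M 0 0 * v0 + M 0 1 * v1) + v1^* * (M 1 0 * v0 + M 1 1 * v1).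
Proof.
rewrite !mxE !big_ord_recr big_ord0 /= !mxE !big_ord_recr !big_ord0 /= !mxE /=.
have -> : widen_ord (m:=2) (leqnSn 1) ord_max = 0 :> 'I_2 by apply: val_inj.
have -> : ord_max = 1 :> 'I_2 by apply: val_inj.
ring.
Qed.

Lemma herm_E (X : 'M[C]_2) : is_hermitian X ->
  X = mx2 (@complex.Re R (X 0 0))%:C (X 0 1) (X 0 1)^* (@complex.Re R (X 1 1))%:C.
Proof.
move=> H.
have h i j : X i j = (X j i)^*.
  by rewrite -{1}H /adjm !mxE.
rewrite {1}(mx2_eq X); congr mx2.
- move: (h 0 0); case: (X 0 0) => u w /= [] hw.
  by apply/eqP; rewrite eq_complex /= eqxx /=; apply/eqP; lra.
- exact: h.
- move: (h 1 1); case: (X 1 1) => u w /= [] hw.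
  by apply/eqP; rewrite eq_complex /= eqxx /=; apply/eqP; lra.
Qed.

Lemma herm_mx2 (a d : R) (b : C) : is_hermitian (mx2 a%:C b b^* d%:C).
Proof.
rewrite /is_hermitian /adjm; apply/matrixP=> i j; rewrite !mxE.
case: i => [[|[|//]] Hi]; case: j => [[|[|//]] Hj] /=;
  by rewrite ?oppr0 ?conjcK.
Qed.

Lemma bridge w gp gm gz (a d : R) (b v0 v1 : C) :
  ((map_mx conjc (cv2 v0 v1))^T *m Dm w gp gm gz (mx2 a%:C b b^* d%:C) *m cv2 v0 v1) 0 0
  = (Fr gp gm gz (d-a) (complex.Re b) (complex.Im b) (complex.Re v0) (complex.Im v0) (complex.Re v1) (complex.Im v1))%:C.
Proof.
rewrite qf_E D_E !mxE /=.
case: b => x y; case: v0 => p q; case: v1 => r s.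
apply/eqP; rewrite eq_complex /=; apply/andP; split; apply/eqP; rewrite /Fr; ring.
Qed.
End S.

Theorem mainTheorem7 (R : rcfType) (w gp gm gz : R) :
  (forall X : 'M[complex R]_2, is_hermitian X ->
     is_psd (Ldag w gp gm gz (X * X) - Ldag w gp gm gz X * X - X * Ldag w gp gm gz X))
  <-> (0 <= gp /\ 0 <= gm /\ 0 <= Num.sqrt (gp * gm) + 2 * gz).
Proof.
split.
- move=> H; apply: Fr_nec => e x y p q r s.
  have h := H _ (herm_mx2 _ 0 e (x +i* y)) (cv2 _ (p +i* q) (r +i* s)).
  move: h; rewrite -[Ldag _ _ _ _ _ - _ - _]/(@Dm R w gp gm gz _) bridge ler0c /= subr0.
  done.
- move=> [hp [hm hc]] X hX v.
  rewrite -[Ldag _ _ _ _ _ - _ - _]/(@Dm R w gp gm gz _) (@herm_E R X hX) (@cv2_eq R v) bridge ler0c.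
  exact: Fr_nonneg.
Qed.
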